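(* Let $\psi'$ be a differentiable strongly convex function, let $G(\pi_i,\pi_i')=D_{\psi'}(\pi_i,\pi_i')$, and fix $\mu>0$. For any $\sigma\in\mathcal X$ and any Nash equilibrium $\pi^*\in\Pi^*$ of the original game, $$D_{\psi'}(\pi^*,\pi^{\mu,\sigma})-D_{\psi'}(\pi^*,\sigma)\le-D_{\psi'}(\pi^{\mu,\sigma},\sigma).$$ In particular, if $\sigma^{k+1}=\pi^{\mu,\sigma^k}$, then $D_{\psi'}(\pi^*,\sigma^{k+1})-D_{\psi'}(\pi^*,\sigma^k)\le-D_{\psi'}(\sigma^{k+1},\sigma^k)$ for all $k\ge0$.
   Context: Game. Let $N\ge1$. For each $i\in[N]$, $\mathcal X_i\subseteq\mathbb R^{d_i}$ is a nonempty compact convex set, and $\mathcal X=\prod_i\mathcal X_i$. Each $v_i:\mathcal X\to\mathbb R$ is differentiable, with block gradient $\nabla_{\pi_i}v_i$. The game is monotone: $\sum_i\langle\nabla_{\pi_i}v_i(\pi)-\nabla_{\pi_i}v_i(\pi'),\pi_i-\pi_i'\rangle\le0$ for all $\pi,\pi'$. A Nash equilibrium is a $\pi^*$ with $v_i(\pi^* )\ge v_i(\pi_i,\pi^*_{-i})$ for all $i$ and $\pi_i\in\mathcal X_i$. $\Pi^*$ is the set of Nash equilibria. Bregman divergence: $D_{\psi'}(x,y)=\psi'(x)-\psi'(y)-\langle\nabla\psi'(y),x-y\rangle$, and $D_{\psi'}(\pi,\pi')=\sum_iD_{\psi'}(\pi_i,\pi_i')$. Perturbed equilibrium. For $\mu>0$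 and $\sigma\in\mathcal X$, $\pi^{\mu,\sigma}$ is the profile with $\pi_i^{\mu,\sigma}\in\arg\max_{\pi_i\in\mathcal X_i}\{v_i(\pi_i,\pi^{\mu,\sigma}_{-i})-\mu G(\pi_i,\sigma_i)\}$ for all $i$. *)

(* Defs.v *)
From HB Require Import structures.
From mathcomp Require Import all_boot all_order all_algebra.
From mathcomp Require Import all_classical all_reals all_analysis.
Set Implicit Arguments. Unset Strict Implicit. Unset Printing Implicit Defensive.
Import Order.TTheory GRing.Theory Num.Theory.
Import numFieldNormedType.Exports.
Local Open Scope ring_scope.
Local Open Scope classical_set_scope.

Section Defs.
Variable R : realType.

Definition dotv (n : nat) (a b : 'rV[R]_n) : R := \sum_(j < n) a 0 j * b 0 j.
Definition sqn (n : nat) (a : 'rV[R]_n) : R := dotv a a.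

Definition is_grad (n : nat) (f : 'rV[R]_n -> R) (x g : 'rV[R]_n) : Prop :=
  forall e : R, 0 < e -> exists2 del : R, 0 < del &
    forall y, Num.sqrt (sqn (y - x)) < del ->
      `|f y - f x - dotv g (y - x)| <= e * Num.sqrt (sqn (y - x)).

Definition strongly_convex (n : nat) (psi : 'rV[R]_n -> R)
    (gpsi : 'rV[R]_n -> 'rV[R]_n) : Prop :=
  exists2 rho : R, 0 < rho & forall x y,
    psi y + dotv (gpsi y) (x - y) + rho / 2 * sqn (x - y) <= psi x.

Definition bregman (n : nat) (psi : 'rV[R]_n -> R) (gpsi : 'rV[R]_n -> 'rV[R]_n)
    (x y : 'rV[R]_n) : R :=
  psi x - psi y - dotv (gpsi y) (x - y).

Variables (N : nat) (d : 'I_N -> nat).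

Definition profile := forall i : 'I_N, 'rV[R]_(d i).

Definition psub (p q : profile) : profile := fun i => p i - q i.
Definition pdot (g p : profile) : R := \sum_(i < N) dotv (g i) (p i).
Definition psqn (p : profile) : R := \sum_(i < N) sqn (p i).

Definition is_pgrad (f : profile -> R) (p g : profile) : Prop :=
  forall e : R, 0 < e -> exists2 del : R, 0 < del &
    forall q, Num.sqrt (psqn (psub q p)) < del ->
      `|f q - f p - pdot g (psub q p)| <= e * Num.sqrt (psqn (psub q p)).

(* (x, p_{-i}) : the profile p with player i's strategy replaced by x. *)
Definition upd (p : profile) (i : 'I_N) (x : 'rV[R]_(d i)) : profile :=
  @dfwith _ (fun j : 'I_N => 'rV[R]_(d j)) p i x.

Definition in_profile (X : forall i : 'I_N, set 'rV[R]_(d i)) (p : profile) : Prop :=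
  forall i, X i (p i).

Definition is_block_grad (v : profile -> R) (i : 'I_N) (p : profile)
    (gvi : 'rV[R]_(d i)) : Prop :=
  exists g : profile, is_pgrad v p g /\ g i = gvi.

Definition monotone_game (X : forall i : 'I_N, set 'rV[R]_(d i))
    (gv : forall i : 'I_N, profile -> 'rV[R]_(d i)) : Prop :=
  forall p q, in_profile X p -> in_profile X q ->
    \sum_(i < N) dotv (gv i p - gv i q) (p i - q i) <= 0.

Definition is_nash (X : forall i : 'I_N, set 'rV[R]_(d i))
    (v : 'I_N -> profile -> R) (ps : profile) : Prop :=
  in_profile X ps /\
  forall i (x : 'rV[R]_(d i)), X i x -> v i (upd ps x) <= v i ps.

Definition pbregman (psi : forall i : 'I_N, 'rV[R]_(d i) -> R)
    (gpsi : forall i : 'I_N, 'rV[R]_(d i) -> 'rV[R]_(d i)) (p q : profile) : R :=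
  \sum_(i < N) bregman (psi i) (gpsi i) (p i) (q i).

Definition is_perturbed_eq (X : forall i : 'I_N, set 'rV[R]_(d i))
    (v : 'I_N -> profile -> R)
    (psi : forall i : 'I_N, 'rV[R]_(d i) -> R)
    (gpsi : forall i : 'I_N, 'rV[R]_(d i) -> 'rV[R]_(d i))
    (mu : R) (sigma p : profile) : Prop :=
  in_profile X p /\
  forall i (x : 'rV[R]_(d i)), X i x ->
    v i (upd p x) - mu * bregman (psi i) (gpsi i) x (sigma i)
      <= v i p - mu * bregman (psi i) (gpsi i) (p i) (sigma i).

End Defs.

(* Main.v *)
Require Import Defs.
From HB Require Import structures.
From mathcomp Require Import all_boot all_order all_algebra.
From mathcomp Require Import all_classical all_reals all_analysis.
From mathcomp Require Import lra ring.
Import Order.TTheory GRing.Theory Num.Theory.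
Import numFieldNormedType.Exports.
Set Implicit Arguments. Unset Strict Implicit.
Local Open Scope ring_scope.
Local Open Scope classical_set_scope.

Section H.
Variable R : realType.
Implicit Types n : nat.

Lemma dotvDr n (g a b : 'rV[R]_n) : dotv g (a + b) = dotv g a + dotv g b.
Proof. by rewrite /dotv -big_split; apply: eq_bigr => j _; rewrite mxE mulrDr. Qed.
Lemma dotvDl n (g a b : 'rV[R]_n) : dotv (a + b) g = dotv a g + dotv b g.
Proof. by rewrite /dotv -big_split; apply: eq_bigr => j _; rewrite mxE mulrDl. Qed.
Lemma dotvZr n (g a : 'rV[R]_n) t : dotv g (t *: a) = t * dotv g a.
Proof. by rewrite /dotv mulr_sumr; apply: eq_bigr => j _; rewrite mxE mulrCA. Qed.
Lemma dotvZl n (g a : 'rV[R]_n) t : dotv (t *: a) g = t * dotv a g.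
Proof. by rewrite /dotv mulr_sumr; apply: eq_bigr => j _; rewrite mxE mulrA. Qed.
Lemma dotvNr n (g a : 'rV[R]_n) : dotv g (- a) = - dotv g a.
Proof. by rewrite -scaleN1r dotvZr mulN1r. Qed.
Lemma dotvNl n (g a : 'rV[R]_n) : dotv (- a) g = - dotv a g.
Proof. by rewrite -scaleN1r dotvZl mulN1r. Qed.
Lemma dotvBr n (g a b : 'rV[R]_n) : dotv g (a - b) = dotv g a - dotv g b.
Proof. by rewrite dotvDr dotvNr. Qed.
Lemma dotvBl n (g a b : 'rV[R]_n) : dotv (a - b) g = dotv a g - dotv b g.
Proof. by rewrite dotvDl dotvNl. Qed.
Lemma dotv0r n (g : 'rV[R]_n) : dotv g 0 = 0.
Proof. by rewrite -(scale0r (0 : 'rV[R]_n)) dotvZr mul0r. Qed.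
Lemma sqn_ge0 n (a : 'rV[R]_n) : 0 <= sqn a.
Proof. by rewrite /sqn /dotv sumr_ge0 // => j _; rewrite -expr2 sqr_ge0. Qed.
Lemma sqrt_sqnZ n (a : 'rV[R]_n) t : 0 <= t ->
  Num.sqrt (sqn (t *: a)) = t * Num.sqrt (sqn a).
Proof.
move=> t0; rewrite /sqn dotvZr dotvZl mulrA -expr2 sqrtrM ?sqr_ge0 //.
by rewrite sqrtr_sqr ger0_norm.
Qed.

Lemma grad_dir n (f : 'rV[R]_n -> R) x g w :
  is_grad f x g ->
  (forall t, 0 < t -> t <= 1 -> f (x + t *: w) <= f x) ->
  dotv g w <= 0.
Proof.
move=> hg hmax; rewrite leNgt; apply/negP => c0.
set c := dotv g w in c0.
set s := Num.sqrt (sqn w).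
have s0 : 0 <= s by rewrite sqrtr_ge0.
have K0 : 0 < s + 1 by rewrite ltr_wpDl.
have e0 : 0 < c / 2 / (s + 1) by rewrite !divr_gt0.
have [del del0 hd] := hg _ e0.
set t := Num.min 1 (del / 2 / (s + 1)).
have t0 : 0 < t by rewrite lt_min ltr01 !divr_gt0.
have t1 : t <= 1 by rewrite ge_min lexx.
have tdel : t * s < del.
  apply: (le_lt_trans (y := t * (s + 1))).
    by apply: ler_wpM2l; [exact: ltW | rewrite lerDl].
  apply: (le_lt_trans (y := del / 2 / (s + 1) * (s + 1))).
    by apply: ler_wpM2r; [exact: ltW | rewrite ge_min lexx orbT].
  by rewrite divfK ?gt_eqF // ltr_pdivrMr // ltr_pMr // ltr1n.
have := hd (x + t *: w); rewrite addrAC subrr add0r (@sqrt_sqnZ _ w _ (ltW t0)) -/s => /(_ tdel).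
rewrite dotvZr => hb.
have hm := hmax t t0 t1.
have h1 : t * c <= c / 2 / (s + 1) * (t * s).
  apply: le_trans hb.
  rewrite -normrN; apply: le_trans (ler_norm _).
  rewrite -/c; lra.
have h2 : c / 2 / (s + 1) * (t * s) <= c / 2 * t.
  have -> : c / 2 / (s + 1) * (t * s) = (c / 2 * t) * (s / (s + 1)).
    by ring.
  apply: ler_piMr; first by rewrite ?mulr_ge0 ?divr_ge0 ?ltW.
  by rewrite ler_pdivrMr // mul1r lerDl.
have : t * c <= c / 2 * t by apply: le_trans h2.
rewrite mulrC ler_pM2r //; lra.
Qed.

Lemma grad_comb n (F G : 'rV[R]_n -> R) x a b mu :
  is_grad F x a -> is_grad G x b ->
  is_grad (fun y => F y - mu * G y) x (a - mu *: b).
Proof.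
move=> hF hG e e0.
have K0 : 0 < 1 + `|mu| by rewrite ltr_pwDl.
have e10 : 0 < e / (1 + `|mu|) by rewrite divr_gt0.
have [d1 d10 h1] := hF _ e10.
have [d2 d20 h2] := hG _ e10.
exists (Num.min d1 d2); first by rewrite lt_min d10.
move=> y; rewrite lt_min => /andP [y1 y2].
have A := h1 y y1; have B := h2 y y2.
set s := Num.sqrt _ in A B *.
set e1 := e / (1 + `|mu|) in A B e10.
have -> : F y - mu * G y - (F x - mu * G x) - dotv (a - mu *: b) (y - x)
  = (F y - F x - dotv a (y - x)) - mu * (G y - G x - dotv b (y - x)).
  by rewrite dotvBl dotvZl; ring.
apply: le_trans (ler_normB _ _) _.
rewrite normrM.
have s0 : 0 <= s by rewrite sqrtr_ge0.
have : `|mu| * `|G y - G x - dotv b (y - x)| <= `|mu| * (e1 * s) by rewrite ler_wpM2l.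
have -> : e = e1 * (1 + `|mu|) by rewrite divfK ?gt_eqF.
move=> C; lra.
Qed.

Lemma bregman_grad n (psi : 'rV[R]_n -> R) gpsi x s :
  is_grad psi x (gpsi x) ->
  is_grad (fun y => bregman psi gpsi y s) x (gpsi x - gpsi s).
Proof.
move=> h e e0; have [del d0 hd] := h e e0; exists del => // y hy.
have := hd y hy; congr (_ <= _); congr `|_|.
rewrite /bregman dotvBl !dotvBr; ring.
Qed.

Variables (N : nat) (d : 'I_N -> nat).

Lemma upd_id (p : profile R d) i : upd p (p i) = p.
Proof.
apply: functional_extensionality_dep => j; rewrite /upd.
by case: dfwithP.
Qed.

Lemma upd_in (p : profile R d) i (y : 'rV[R]_(d i)) : upd p y i = y.
Proof. by rewrite /upd dfwithin. Qed.

Lemma upd_out (p : profile R d) i (y : 'rV[R]_(d i)) j : j != i -> upd p y j = p j.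
Proof. by move=> ji; rewrite /upd dfwithout // eq_sym. Qed.

Lemma psqn_upd (p : profile R d) i (y : 'rV[R]_(d i)) :
  psqn (psub (upd p y) p) = sqn (y - p i).
Proof.
rewrite /psqn /psub (bigD1 i) //= upd_in big1 ?addr0 //.
move=> j ji; rewrite upd_out // subrr.
by rewrite /sqn dotv0r.
Qed.

Lemma pdot_upd (g p : profile R d) i (y : 'rV[R]_(d i)) :
  pdot g (psub (upd p y) p) = dotv (g i) (y - p i).
Proof.
rewrite /pdot /psub (bigD1 i) //= upd_in big1 ?addr0 //.
move=> j ji; rewrite upd_out // subrr.
by rewrite dotv0r.
Qed.

Lemma pgrad_block (f : profile R d -> R) p g i :
  is_pgrad f p g -> is_grad (fun y : 'rV[R]_(d i) => f (upd p y)) (p i) (g i).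
Proof.
move=> h e e0; have [del d0 hd] := h e e0; exists del => // y.
rewrite upd_id -psqn_upd -pdot_upd; exact: hd.
Qed.
End H.

Lemma conv_mem (R : realType) n (A : set 'rV[R]_n) x q t :
  convex_set A -> A x -> A q -> 0 < t -> t <= 1 -> A (x + t *: (q - x)).
Proof.
move=> cA Ax Aq t0 t1.
have := cA q x (Itv01 (ltW t0) t1) (mem_set Aq) (mem_set Ax).
rewrite in_setE; congr A => /=.
set z := conv _ _ _.
have -> : z = t *: q + (1 - t) *: x :> 'rV[R]_n by [].
by rewrite scalerBl scale1r scalerBr addrC -!addrA [X in _ + X]addrC.
Qed.

Lemma part1 (R : realType) (N : nat) (d : 'I_N -> nat)
  (X : forall i : 'I_N, set 'rV[R]_(d i))
  (v : 'I_N -> profile R d -> R)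
  (gv : forall i : 'I_N, profile R d -> 'rV[R]_(d i))
  (psi : forall i : 'I_N, 'rV[R]_(d i) -> R)
  (gpsi : forall i : 'I_N, 'rV[R]_(d i) -> 'rV[R]_(d i))
  (mu : R) :
  (forall i, convex_set (X i)) ->
  (forall i p, in_profile X p -> is_block_grad (v i) p (gv i p)) ->
  monotone_game X gv ->
  (forall i x, is_grad (psi i) x (gpsi i x)) ->
  0 < mu ->
  forall (sigma ps pmu : profile R d),
      is_nash X v ps ->
      is_perturbed_eq X v psi gpsi mu sigma pmu ->
      pbregman psi gpsi ps pmu - pbregman psi gpsi ps sigma
        <= - pbregman psi gpsi pmu sigma.
Proof.
move=> hconv hbg hmono hpsi mu0 sigma ps pmu [psX psN] [pmX pmE].
pose a i := dotv (gv i pmu) (ps i - pmu i).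
pose b i := dotv (gv i ps) (ps i - pmu i).
pose c i := dotv (gpsi i (pmu i) - gpsi i (sigma i)) (ps i - pmu i).
have hN i : 0 <= b i.
  have [g [hg gi]] := hbg i ps psX.
  have := grad_dir (w := pmu i - ps i) (@pgrad_block _ _ _ _ _ _ i hg).
  rewrite gi -opprB dotvNr oppr_le0; apply => t t0 t1.
  by rewrite upd_id opprB; apply: psN; exact: (conv_mem (hconv i) (psX i) (pmX i) t0 t1).
have hP i : a i <= mu * c i.
  have [g [hg gi]] := hbg i pmu pmX.
  have := grad_dir (w := ps i - pmu i)
    (@grad_comb _ _ _ _ _ _ _ mu (@pgrad_block _ _ _ _ _ _ i hg) (@bregman_grad _ _ _ _ _ (sigma i) (hpsi i (pmu i)))).
  rewrite gi dotvBl dotvZl subr_le0; apply => t t0 t1.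
  by rewrite upd_id; apply: pmE; exact: (conv_mem (hconv i) (pmX i) (psX i) t0 t1).
have hM : \sum_(i < N) b i - \sum_(i < N) a i <= 0.
  apply: le_trans (hmono pmu ps pmX psX); rewrite le_eqVlt; apply/orP; left.
  rewrite -sumrB; apply/eqP; apply: eq_bigr => i _.
  by rewrite /a /b -[pmu i - ps i]opprB dotvNr dotvBl; ring.
have hE : pbregman psi gpsi ps pmu - pbregman psi gpsi ps sigma
   + pbregman psi gpsi pmu sigma = - \sum_(i < N) c i.
  rewrite /pbregman -sumrB -big_split -sumrN; apply: eq_bigr => i _.
  by rewrite /bregman /c !dotvBl !dotvBr /=; ring.
have S1 : \sum_(i < N) a i <= mu * \sum_(i < N) c i.
  by rewrite mulr_sumr; apply: ler_sum => i _.
have S2 : 0 <= \sum_(i < N) b i by apply: sumr_ge0 => i _.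
have S3 : 0 <= mu * \sum_(i < N) c i by lra.
have S4 : 0 <= \sum_(i < N) c i by rewrite (pmulr_rge0 _ mu0) in S3.
lra.
Qed.

Theorem lemma9 (R : realType) (N : nat) (d : 'I_N -> nat)
  (X : forall i : 'I_N, set 'rV[R]_(d i))
  (v : 'I_N -> profile R d -> R)
  (gv : forall i : 'I_N, profile R d -> 'rV[R]_(d i))
  (psi : forall i : 'I_N, 'rV[R]_(d i) -> R)
  (gpsi : forall i : 'I_N, 'rV[R]_(d i) -> 'rV[R]_(d i))
  (mu : R) :
  (0 < N)%N ->
  (forall i, X i !=set0) ->
  (forall i, compact (X i)) ->
  (forall i, convex_set (X i)) ->
  (forall i p, in_profile X p -> is_block_grad (v i) p (gv i p)) ->
  monotone_game X gv ->
  (forall i x, is_grad (psi i) x (gpsi i x)) ->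
  (forall i, strongly_convex (psi i) (gpsi i)) ->
  0 < mu ->
  (forall (sigma ps pmu : profile R d),
      in_profile X sigma -> is_nash X v ps ->
      is_perturbed_eq X v psi gpsi mu sigma pmu ->
      pbregman psi gpsi ps pmu - pbregman psi gpsi ps sigma
        <= - pbregman psi gpsi pmu sigma)
  /\
  (forall (sigma : nat -> profile R d) (ps : profile R d),
      in_profile X (sigma 0%N) ->
      (forall k, is_perturbed_eq X v psi gpsi mu (sigma k) (sigma k.+1)) ->
      is_nash X v ps ->
      forall k, pbregman psi gpsi ps (sigma k.+1) - pbregman psi gpsi ps (sigma k)
        <= - pbregman psi gpsi (sigma k.+1) (sigma k)).

Proof.
move=> _ _ _ hconv hbg hmono hpsi _ mu0.
have P1 := part1 hconv hbg hmono hpsi mu0.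
split.
  by move=> sigma ps pmu _ hn hp; apply: P1 hn hp.
by move=> sigma ps _ hs hn k; apply: P1 hn (hs k).
Qed.
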